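(* Let $E$ be a countable set, $V$ a topological vector space over a field $k$, $f:E\to V$ a function, and $M_f=(E,\mathcal{L}(f))$ the associated topological independence system. An independent set $S\in\mathcal{L}(f)$ is maximal in $\mathcal{L}(f)$ if and only if $f(e)\in\hat f(C_S(f))$ for every $e\in E$.
   Context: Let $C(f)$ be the set of $c\in k^E$ such that the sum $\sum_{e\in E}c(e)f(e)$ converges in the topology of $V$ (meaning that one of its sequences of partial sums converges absolutely), and define $\hat f:C(f)\to V$ by $\hat f(c)=\sum_{e\in E}c(e)f(e)$. For $S\subseteq E$ let $C_S(f)=\{c\in C(f): c(e)=0 \text{ for all } e\in E\setminus S\}$ and let $\hat f|_S$ be the restriction of $\hat f$ to $C_S(f)$. Then $\mathcal{L}(f)=\{S\subseteq E: \ker(\hat f|_S)=\{0\}\}$, and $M_f=(E,\mathcal{L}(f))$ is called a topological independence system. Maximality is with respect to inclusion. *)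

(* Defs.v *)
From HB Require Import structures.
From mathcomp Require Import all_boot all_order all_algebra.
From mathcomp Require Import boolp classical_sets topology.
Set Implicit Arguments. Unset Strict Implicit. Unset Printing Implicit Defensive.
Import Order.TTheory GRing.Theory Num.Theory.
Local Open Scope classical_set_scope.
Local Open Scope ring_scope.

#[short(type="topZmodType")]
HB.structure Definition TopZmod := {V of GRing.Zmodule V & Topological V}.

(* An lmodule over k carrying a topology (continuity axioms as hypotheses). *)
#[short(type="topLmodType")]
HB.structure Definition TopLmod (k : fieldType) :=
  {V of GRing.Lmodule k V & Topological V}.

(* A field carrying a topology (continuity axioms are stated as hypotheses). *)
#[short(type="topFieldType")]
HB.structure Definition TopField := {K of GRing.Field K & Topological K}.

Definition is_topological_field (k : topFieldType) : Prop :=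
  [/\ continuous (fun p : k * k => p.1 + p.2),
      continuous (fun p : k * k => p.1 * p.2),
      continuous (fun x : k => - x)
    & forall x : k, x != 0 -> {for x, continuous (fun y : k => y^-1)}].

Definition is_tvs (k : topFieldType) (V : topLmodType k) : Prop :=
  continuous (fun p : V * V => p.1 + p.2) /\
  continuous (fun p : k * V => p.1 *: p.2).

(* An enumeration of the countable set E: every element occurs exactly once,
   the remaining positions (if E is finite) are padded with None. *)
Definition enumeration (E : Type) (s : nat -> option E) : Prop :=
  (forall e, exists i, s i = Some e) /\
  (forall i j e, s i = Some e -> s j = Some e -> i = j).

Definition oterm (E : Type) (k : fieldType) (V : lmodType k)
  (f : E -> V) (c : E -> k) (x : option E) : V :=
  match x with Some e => c e *: f e | None => 0 end.

(* \sum_{e in E} c(e) f(e) converges (unconditionally) to v: the partial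
   sums along every enumeration of E converge to v. *)
Definition sums_to (E : Type) (k : topFieldType) (V : topLmodType k)
  (f : E -> V) (c : E -> k) (v : V) : Prop :=
  forall s : nat -> option E, enumeration s ->
    (fun n => \sum_(i < n) oterm f c (s i)) @ \oo --> v.

Definition Cf (E : Type) (k : topFieldType) (V : topLmodType k)
  (f : E -> V) : set (E -> k) := [set c | exists v, sums_to f c v].

Definition CSf (E : Type) (k : topFieldType) (V : topLmodType k)
  (f : E -> V) (S : set E) : set (E -> k) :=
  [set c | Cf f c /\ forall e, ~ S e -> c e = 0].

Definition hatf_image (E : Type) (k : topFieldType) (V : topLmodType k)
  (f : E -> V) (S : set E) : set V :=
  [set v | exists2 c, CSf f S c & sums_to f c v].

Definition Lf (E : Type) (k : topFieldType) (V : topLmodType k)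
  (f : E -> V) : set (set E) :=
  [set S | forall c, CSf f S c -> sums_to f c 0 -> c = (fun _ => 0)].

Definition maximal_in (E : Type) (L : set (set E)) (S : set E) : Prop :=
  L S /\ forall T, L T -> S `<=` T -> T = S.

(* Main.v *)
Require Import Defs.
From HB Require Import structures.
From mathcomp Require Import all_boot all_order all_algebra.
From mathcomp Require Import boolp classical_sets topology.
Import GRing.Theory.
Local Open Scope classical_set_scope.
Local Open Scope ring_scope.

Lemma lin_cvg (k : topFieldType) (V : topLmodType k) (hV : is_tvs V)
  (u w : nat -> V) (a b : V) (t : k) :
  u @ \oo --> a -> w @ \oo --> b ->
  (fun n => u n + t *: w n) @ \oo --> a + t *: b.
Proof.
move=> hu hw; case: hV => hadd hsc.
have hw' : (fun n => t *: w n) @ \oo --> t *: b.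
  have hp : (fun n => (t, w n)) @ \oo --> (t, b).
    by apply: cvg_pair => //; apply: cvg_cst.
  exact: (continuous_cvg _ (hsc (t, b)) hp).
have hp : (fun n => (u n, t *: w n)) @ \oo --> (a, t *: b) by apply: cvg_pair.
exact: (continuous_cvg _ (hadd (a, t *: b)) hp).
Qed.

Lemma sums_lin (E : Type) (k : topFieldType) (V : topLmodType k) (hV : is_tvs V)
  (f : E -> V) (c d : E -> k) (u v : V) (t : k) :
  sums_to f c u -> sums_to f d v ->
  sums_to f (fun x => c x + t * d x) (u + t *: v).
Proof.
move=> hc hd s hs.
have := lin_cvg _ _ hV _ _ _ _ t (hc s hs) (hd s hs).
suff -> : (fun n => \sum_(i < n) oterm f (fun x => c x + t * d x) (s i)) =
  (fun n => \sum_(i < n) oterm f c (s i) + t *: \sum_(i < n) oterm f d (s i)) by [].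
apply: funext => n; rewrite scaler_sumr -big_split; apply: eq_bigr => i _.
by case: (s i) => [e|] /=; rewrite ?scalerDl ?scalerA ?scaler0 ?addr0.
Qed.

Definition delta (E : eqType) (k : fieldType) (e0 x : E) : k :=
  if x == e0 then 1 else 0.

Lemma sums_delta (E : countType) (k : topFieldType) (V : topLmodType k)
  (f : E -> V) (e0 : E) : sums_to f (delta _ k e0) (f e0).
Proof.
move=> s [hsur huniq]; have [i0 hi0] := hsur e0.
have key : forall n, \sum_(i < n) oterm f (delta _ k e0) (s i) =
   if (i0 < n)%N then f e0 else 0.
  elim=> [|n IH]; first by rewrite big_ord0.
  rewrite big_ord_recr /= IH.
  have hterm : oterm f (delta _ k e0) (s n) = if n == i0 then f e0 else 0.
    case hsn: (s n) => [e|] /=; rewrite /delta.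
    - case: eqP => [ee|ne].
      + subst e; have -> := huniq _ _ _ hsn hi0; by rewrite eqxx scale1r.
      + case: eqP => [ni|_]; last by rewrite scale0r.
        by subst n; rewrite hsn in hi0; case: hi0.
    - case: eqP => // ni; by subst n; rewrite hsn in hi0.
  rewrite hterm.
  have [h|h|->] := ltngtP i0 n.
  - by rewrite ltnS (ltnW h) addr0.
  - by rewrite ltnS leqNgt h addr0.
  - by rewrite ltnSn add0r.
apply: cvg_near_cst; exists i0.+1 => // n /= hn.
by rewrite key hn.
Qed.

Theorem theorem6p2p1 (E : countType) (k : topFieldType) (V : topLmodType k)
  (hk : is_topological_field k) (hV : is_tvs V) (f : E -> V) (S : set E) :
  Lf f S -> (maximal_in (Lf f) S <-> forall e : E, hatf_image f S (f e)).
Proof.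
move=> hS; split.
- move=> [_ hmax] e; case: (pselect (S e)) => hSe.
  + exists (delta _ k e); last exact: sums_delta.
    split; first by exists (f e); exact: sums_delta.
    move=> x hx; rewrite /delta; case: eqP => // xe; by subst x.
  + have nL : ~ Lf f (S `|` [set e]).
      move=> hL; have heq := hmax _ hL (@subsetUl _ S [set e]).
      by apply: hSe; rewrite -heq; right.
    move/existsNP: nL => [c]; move/not_implyP => [hc]; move/not_implyP => [hc0 hne].
    have hce : c e != 0.
      apply/negP => /eqP hce0; apply: hne; apply: hS => //.
      split; first exact: hc.1.
      move=> x hx; case: (pselect (x = e)) => [->//|xe].
      by apply: hc.2; case.
    have hsum := sums_lin _ _ _ hV _ _ _ _ _ (- (c e)^-1) (sums_delta _ _ _ f e) hc0.
    rewrite scaler0 addr0 in hsum.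
    exists (fun x => delta _ k e x + - (c e)^-1 * c x) => //.
    split; first by exists (f e).
    move=> x hx; rewrite /delta; case: eqP => [xe|xe].
    * by subst x; rewrite mulNr mulVf // subrr.
    * rewrite (hc.2 x) ?mulr0 ?addr0 //; by case.
- move=> hall; split => // T hT hST.
  apply/seteqP; split; last done.
  move=> e hTe; apply: contrapT => hSe.
  have [c [hcC hcS] hcs] := hall e.
  have hsum := sums_lin _ _ _ hV _ _ _ _ _ (-1) hcs (sums_delta _ _ _ f e).
  rewrite scaleN1r subrr in hsum.
  have := hT _ _ hsum.
  have hCT : CSf f T (fun x => c x + -1 * delta _ k e x).
    split; first by exists 0.
    move=> x hx; rewrite /delta; case: eqP => [xe|_].
    * by subst x.
    * by rewrite hcS ?mulr0 ?addr0 // => /hST.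
  move=> /(_ hCT) /(congr1 (fun g => g e)).
  by rewrite /delta eqxx hcS // mulr1 add0r; apply/eqP; rewrite oppr_eq0 oner_eq0.
Qed.
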